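(* Let $\{A_k\}_{k\ge0}$ be a sequence of nonnegative reals with $A_0=0$ and $A_k=A_{k-1}+\sqrt{c_1^2+c_2A_{k-1}}$ for $k\ge1$, where $c_1>0$ and $c_2\ge0$. Let $K_0=\lceil\frac{c_2}{9c_1}\rceil$. Then $$A_k\ge\begin{cases}\frac{c_2}{9}\Big(k-K_0+\max\Big\{3\sqrt{\frac{c_1}{c_2}},1\Big\}\Big)^2,&\text{if }c_2>0\text{ and }k>K_0,\\ c_1k,&\text{otherwise.}\end{cases}$$ *)

(* Defs.v *)
From Stdlib Require Import Reals Lra Lia ZArith.
Open Scope R_scope.

Definition K0 (c1 c2 : R) : Z := Zceil (c2 / (9 * c1)).

(* Main.v *)
Require Import Defs.
From Stdlib Require Import Reals ZArith Lra Lia.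
Open Scope R_scope.

Lemma step_mono (c1 c2 B x : R) : 0 <= c2 -> 0 <= B -> B <= x ->
  B + sqrt (c1 ^ 2 + c2 * B) <= x + sqrt (c1 ^ 2 + c2 * x).
Proof.
  intros H1 H2 H3. assert (sqrt (c1 ^ 2 + c2 * B) <= sqrt (c1 ^ 2 + c2 * x)).
  { apply sqrt_le_1_alt. nra. } lra.
Qed.

Theorem lemma6 (c1 c2 : R) (A : nat -> R)
  (hc1 : 0 < c1) (hc2 : 0 <= c2)
  (hnn : forall k, 0 <= A k)
  (h0 : A 0%nat = 0)
  (hrec : forall k : nat, A (S k) = A k + sqrt (c1 ^ 2 + c2 * A k)) :
  forall k : nat,
    if Rlt_dec 0 c2 then
      if Z_lt_dec (K0 c1 c2) (Z.of_nat k) then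
        A k >= c2 / 9 *
          (INR k - IZR (K0 c1 c2) + Rmax (3 * sqrt (c1 / c2)) 1) ^ 2
      else A k >= c1 * INR k
    else A k >= c1 * INR k.
Proof.
  assert (lin : forall k, A k >= c1 * INR k).
  { induction k as [|k IH].
    - rewrite h0; simpl; lra.
    - rewrite hrec, S_INR.
      assert (c1 <= sqrt (c1 ^ 2 + c2 * A k)).
      { rewrite <- (sqrt_pow2 c1) at 1 by lra. apply sqrt_le_1_alt.
        specialize (hnn k). nra. }
      lra. }
  intro k.
  destruct (Rlt_dec 0 c2) as [Hc2|Hc2]; [|apply lin].
  destruct (Z_lt_dec (K0 c1 c2) (Z.of_nat k)) as [Hk|Hk]; [|apply lin].
  set (m := Rmax (3 * sqrt (c1 / c2)) 1).
  set (K := K0 c1 c2).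
  assert (HK : c2 / (9 * c1) <= IZR K).
  { unfold K, K0. apply Zceil_bound. }
  assert (Hpos : 0 < c2 / (9 * c1)).
  { apply Rdiv_lt_0_compat; lra. }
  assert (HK1 : (1 <= K)%Z).
  { assert (H0K : (0 < K)%Z) by (apply lt_IZR; change (IZR 0) with 0; lra). clearbody K. lia. }
  assert (HK1R : 1 <= IZR K) by (apply IZR_le; lia).
  assert (Hm1 : 1 <= m) by apply Rmax_r.
  set (Kn := Z.to_nat K).
  assert (HKn : IZR K = INR Kn).
  { unfold Kn. rewrite INR_IZR_INZ, Z2Nat.id by lia; reflexivity. }
  assert (base : c2 / 9 * m ^ 2 <= A Kn).
  { assert (A Kn >= c1 * INR Kn) by apply lin.
    rewrite <- HKn in H.
    unfold m, Rmax. destruct (Rle_dec (3 * sqrt (c1 / c2)) 1).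
    - assert (c2 / 9 <= c1 * IZR K).
      { apply Rmult_le_compat_l with (r := c1) in HK; [|lra].
        replace (c1 * (c2 / (9 * c1))) with (c2 / 9) in HK by (field; lra).
        lra. }
      lra.
    - replace ((3 * sqrt (c1 / c2)) ^ 2) with (9 * (sqrt (c1 / c2)) ^ 2) by ring.
      rewrite pow2_sqrt by (apply Rlt_le, Rdiv_lt_0_compat; lra).
      replace (c2 / 9 * (9 * (c1 / c2))) with c1 by (field; lra).
      nra. }
  assert (ind : forall j, c2 / 9 * (INR j + m) ^ 2 <= A (Kn + j)%nat).
  { induction j as [|j IH].
    - rewrite Nat.add_0_r. simpl INR. replace (0 + m) with m by ring. exact base.
    - rewrite Nat.add_succ_r, hrec, S_INR.
      set (t := INR j + m).
      assert (Ht : 1 <= t) by (unfold t; pose proof (pos_INR j); lra).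
      pose proof (step_mono c1 c2 (c2 / 9 * t ^ 2) (A (Kn + j)%nat) ltac:(lra)
        ltac:(pose proof (pow2_ge_0 t); apply Rmult_le_pos; [unfold Rdiv; apply Rmult_le_pos; lra | lra])
        IH) as Hs.
      assert (sqrt ((c2 * t / 3) ^ 2) <= sqrt (c1 ^ 2 + c2 * (c2 / 9 * t ^ 2))).
      { apply sqrt_le_1_alt. pose proof (pow2_ge_0 c1). nra. }
      rewrite sqrt_pow2 in H by (apply Rmult_le_pos; [apply Rmult_le_pos|]; lra).
      replace (INR j + 1 + m) with (t + 1) by (unfold t; ring).
      clearbody t. assert (0 <= c2 * (t - 1)) by (apply Rmult_le_pos; lra). nra. }
  assert (Hkk : k = (Kn + (k - Kn))%nat).
  { unfold Kn. lia. }
  rewrite Hkk at 1 2.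
  rewrite plus_INR, <- HKn.
  replace (IZR K + INR (k - Kn) - IZR K) with (INR (k - Kn)) by ring.
  apply Rle_ge, ind.
Qed.
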